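(* In the setting described in the context, the perimeter of $K$ satisfies $$\mathcal{P}=\int_{\partial K}\ell(\rho)^2\,\frac{d\omega}{ds}\,d\theta=\int_{\partial K}\kappa_g\,\ell(\rho)^2\,\frac{\ell(x)c(x)}{\ell(r)c(r)}\,d\theta=\int_{\partial K}\kappa_g\,\ell(\rho)^2\,\frac{1-k\,a(x)}{1-k\,a(r)}\,d\theta .$$
   Context: $M$ is $\mathbb{E}^2$, $\mathbb{S}^2$ or $\mathbb{H}^2$ of constant curvature $k$ ($k=0$, $k>0$, $k<0$). Functions: for $k>0$, $\ell(r)=\sin(\sqrt{k}r)/\sqrt{k}$, $a(r)=(1-\cos(\sqrt{k}r))/k$, $c(r)=\sqrt{k}\cot(\sqrt{k}r)$; for $k=0$, $\ell(r)=r$, $a(r)=r^2/2$, $c(r)=1/r$; for $k<0$, $\ell(r)=\sinh(\sqrt{-k}r)/\sqrt{-k}$, $a(r)=(1-\cosh(\sqrt{-k}r))/k$, $c(r)=\sqrt{-k}\coth(\sqrt{-k}r)$ (these make sense for negative $r$ too; $\ell(r)c(r)=1-ka(r)$). Setting: fix $O\in M$; $K\subset M$ is a compact convex set with nonempty interior and $C^2$ boundary (on $\mathbb{S}^2$, $K$ lies in the open hemisphere centered at $O$); $\partial K$ is oriented counterclockwise and parametrized by arclength $s$; $\kappa_g\ge0$ is its geodesic curvature. For $P=P(s)\in\partial K$ let $\lambda$ be the tangent geodesic (support line) of $K$ at $P$. For an angle $\omega$ let $\gamma_\omega$ be the unit-speed geodesic with $\gamma_\omega(0)=O$ and initial direction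 at angle $\omega$. Then $\omega=\omega(s)$ (chosen continuous in $s$) and $r=r(s)\in\mathbb{R}$ are determined by: $\lambda$ is perpendicular to $\gamma_\omega$ at $F=\gamma_\omega(r)$ and $K$ lies in the closed half-plane bounded by $\lambda$ containing $\gamma_\omega(t)$ for $t<r$. $x=x(s)$ is the signed distance along $\lambda$ from $F$ to $P$, positive iff $P$ lies on the ray from $F$ in the direction obtained by rotating $\gamma_\omega'(r)$ clockwise by $\pi/2$. Additionally $(\rho,\theta)$ are geodesic polar coordinates of $P$ about $O$; $\ell(\rho)^2\,d\theta$ is a smooth 1-form (extending across $O$), and the integrals are of 1-forms along $\partial K$. *)

(* Defs.v *)
From Stdlib Require Import Reals.
From Coquelicot Require Import Coquelicot.
Open Scope R_scope.

Definition ell (k r : R) : R :=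
  if Rlt_dec 0 k then sin (sqrt k * r) / sqrt k
  else if Req_EM_T k 0 then r
  else sinh (sqrt (- k) * r) / sqrt (- k).

Definition aa (k r : R) : R :=
  if Rlt_dec 0 k then (1 - cos (sqrt k * r)) / k
  else if Req_EM_T k 0 then r ^ 2 / 2
  else (1 - cosh (sqrt (- k) * r)) / k.

Definition cc (k r : R) : R :=
  if Rlt_dec 0 k then sqrt k * (cos (sqrt k * r) / sin (sqrt k * r))
  else if Req_EM_T k 0 then 1 / r
  else sqrt (- k) * (cosh (sqrt (- k) * r) / sinh (sqrt (- k) * r)).

(* The product l(r) c(r), with its removable singularity at r = 0 filled
   in by continuity (the paper uses l c = 1 - k a, valid also at 0). *)
Definition lc (k r : R) : R :=
  if Req_EM_T r 0 then 1 else ell k r * cc k r.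

(* The model of M (projective / gnomonic / Beltrami-Klein chart        *)
(* centred at O = (0,0)): points are u in R^2 with 1 + k|u|^2 > 0      *)
(* (all of R^2 = the open hemisphere centred at O if k > 0, a disk if  *)
(* k < 0), with the Riemannian metric                                  *)
(*   g_u(v,w) = ((1+k|u|^2) v.w - k (u.v)(u.w)) / (1+k|u|^2)^2,        *)
(* which has constant curvature k; geodesics are chart straight lines, *)
(* and g_O is the Euclidean inner product.                             *)
Definition pt := (R * R)%type.
Definition origin : pt := (0, 0).
Definition dot (u v : pt) : R := fst u * fst v + snd u * snd v.
Definition det2 (u v : pt) : R := fst u * snd v - snd u * fst v.
Definition padd (u v : pt) : pt := (fst u + fst v, snd u + snd v).
Definition psub (u v : pt) : pt := (fst u - fst v, snd u - snd v).
Definition pscal (t : R) (u : pt) : pt := (t * fst u, t * snd u).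
Definition rotl (v : pt) : pt := (- snd v, fst v).

Definition Dk (k : R) (u : pt) : R := 1 + k * dot u u.
Definition in_M (k : R) (u : pt) : Prop := 0 < Dk k u.

Definition metric (k : R) (u v w : pt) : R :=
  (Dk k u * dot v w - k * dot u v * dot u w) / (Dk k u) ^ 2.

Definition comp (u : pt) (i : nat) : R := match i with O => fst u | _ => snd u end.
Definition upd (u : pt) (i : nat) (t : R) : pt :=
  match i with O => (t, snd u) | _ => (fst u, t) end.
Definition basis (i : nat) : pt := match i with O => (1, 0) | _ => (0, 1) end.

Definition gco (k : R) (i j : nat) (u : pt) : R := metric k u (basis i) (basis j).
Definition gdet (k : R) (u : pt) : R :=
  gco k 0 0 u * gco k 1 1 u - gco k 0 1 u * gco k 1 0 u.
Definition ginv (k : R) (i j : nat) (u : pt) : R :=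
  match i, j with
  | O, O => gco k 1 1 u / gdet k u
  | S _, S _ => gco k 0 0 u / gdet k u
  | O, S _ => - gco k 0 1 u / gdet k u
  | S _, O => - gco k 1 0 u / gdet k u
  end.
Definition partial (f : pt -> R) (l : nat) (u : pt) : R :=
  Derive (fun t => f (upd u l t)) (comp u l).
Definition sum2 (f : nat -> R) : R := f 0%nat + f 1%nat.

Definition christ (k : R) (i j m : nat) (u : pt) : R :=
  / 2 * sum2 (fun l => ginv k i l u *
     (partial (gco k l m) j u + partial (gco k l j) m u - partial (gco k j m) l u)).

Definition vel (c : R -> pt) (s : R) : pt :=
  (Derive (fun t => fst (c t)) s, Derive (fun t => snd (c t)) s).
Definition acc (c : R -> pt) (s : R) : pt :=
  (Derive (Derive (fun t => fst (c t))) s, Derive (Derive (fun t => snd (c t))) s).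

Definition covacc (k : R) (c : R -> pt) (s : R) : pt :=
  let v := vel c s in
  let F i := comp (acc c s) i +
     sum2 (fun j => sum2 (fun m => christ k i j m (c s) * comp v j * comp v m)) in
  (F 0%nat, F 1%nat).

(* geodesic curvature of a unit-speed curve: kappa_g = <nabla_T T, N>
   = dA(T, nabla_T T), dA = sqrt(det g) dx^dy the Riemannian area form
   (N = positively oriented unit normal). *)
Definition geod_curv (k : R) (c : R -> pt) (s : R) : R :=
  sqrt (gdet k (c s)) * det2 (vel c s) (covacc k c s).

(* admissible parameter range of radial geodesics (|t| < pi/(2 sqrt k)
   when k > 0, i.e. inside the open hemisphere) *)
Definition in_range (k t : R) : Prop := k <= 0 \/ sqrt k * Rabs t < PI / 2.

(* unit-speed geodesic from O with initial direction at angle om: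
   gamma_om(t) = tan_k(t) (cos om, sin om), tan_k = l/(1 - k a). *)
Definition tan_k (k t : R) : R := ell k t / (1 - k * aa k t).
Definition gam (k om t : R) : pt := (tan_k k t * cos om, tan_k k t * sin om).

Definition seg_len (k : R) (F P : pt) : R :=
  RInt (fun u => sqrt (metric k (padd F (pscal u (psub P F))) (psub P F) (psub P F)))
       0 1.

(* signed distance x along lambda from F = gamma_om(r) to P: positive iff
   P lies on the ray from F in the direction obtained by rotating
   gamma_om'(r) clockwise by pi/2 (for vectors g-orthogonal to gamma', this
   is the side where det(gamma', .) < 0). *)
Definition xsd (k om r : R) (P : pt) : R :=
  let F := gam k om r in
  if Rlt_dec (det2 (vel (gam k om) r) (psub P F)) 0 then seg_len k F P
  else - seg_len k F P.

(* planar topology / convexity (geodesic convexity = chart convexity) *)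
Definition sqd (p q : pt) : R := dot (psub p q) (psub p q).
Definition intK (K : pt -> Prop) (p : pt) : Prop :=
  exists e, 0 < e /\ forall q, sqd p q < e -> K q.
Definition closK (K : pt -> Prop) (p : pt) : Prop :=
  forall e, 0 < e -> exists q, K q /\ sqd p q < e.
Definition bdry (K : pt -> Prop) (p : pt) : Prop := closK K p /\ ~ intK K p.
Definition compact_convex_body (k : R) (K : pt -> Prop) : Prop :=
  (forall p, closK K p -> K p) /\
  (exists B, forall p, K p -> dot p p <= B) /\
  (forall p, K p -> in_M k p) /\
  (forall p q t, K p -> K q -> 0 <= t <= 1 ->
       K (padd (pscal (1 - t) p) (pscal t q))) /\
  (exists p, intK K p).

(* Main.v *)
Require Import Defs.
From Stdlib Require Import Reals Lra Psatz.
From Coquelicot Require Import Coquelicot.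
Open Scope R_scope.

Definition Ck (k t : R) : R := 1 - k * aa k t.

Lemma cosh_sinh_1 x : cosh x ^ 2 - sinh x ^ 2 = 1.
Proof.
  unfold cosh, sinh.
  assert (H : exp x * exp (- x) = 1) by (rewrite <- exp_plus; replace (x + - x) with 0 by ring; apply exp_0).
  nra.
Qed.

Lemma cosh_pos x : 0 < cosh x.
Proof. unfold cosh. pose proof (exp_pos x). pose proof (exp_pos (-x)). lra. Qed.

Lemma Ck_ell k t : Ck k t ^ 2 + k * ell k t ^ 2 = 1.
Proof.
  unfold Ck, ell, aa.
  destruct (Rlt_dec 0 k) as [Hk|Hk].
  - pose proof (sqrt_lt_R0 k Hk) as Hs.
    assert (Hsq : sqrt k * sqrt k = k) by (apply sqrt_sqrt; lra).
    pose proof (sin2_cos2 (sqrt k * t)) as H. unfold Rsqr in H.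
    set (y := sqrt k * t) in *.
    replace (1 - k * ((1 - cos y) / k)) with (cos y) by (field; lra).
    replace (k * (sin y / sqrt k) ^ 2) with (sin y ^ 2)
      by (replace k with (sqrt k * sqrt k) at 1 by lra; field; lra).
    nra.
  - destruct (Req_EM_T k 0) as [Hk0|Hk0].
    + subst. ring.
    + assert (Hk' : 0 < - k) by lra.
      pose proof (sqrt_lt_R0 (-k) Hk') as Hs.
      assert (Hsq : sqrt (-k) * sqrt (-k) = -k) by (apply sqrt_sqrt; lra).
      pose proof (cosh_sinh_1 (sqrt (-k) * t)) as H.
      set (y := sqrt (-k) * t) in *.
      replace (1 - k * ((1 - cosh y) / k)) with (cosh y) by (field; lra).
      replace (k * (sinh y / sqrt (-k)) ^ 2) with (- sinh y ^ 2).
      2:{ replace k with (- (sqrt (-k) * sqrt (-k))) at 1 by lra. field; lra. }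
      lra.
Qed.

Lemma ell_deriv k t : is_derive (ell k) t (Ck k t).
Proof.
  unfold Ck, ell, aa.
  destruct (Rlt_dec 0 k) as [Hk|Hk].
  - pose proof (sqrt_lt_R0 k Hk) as Hs.
    auto_derive; auto. field; lra.
  - destruct (Req_EM_T k 0) as [Hk0|Hk0].
    + subst. auto_derive; auto. ring.
    + assert (Hk' : 0 < - k) by lra.
      pose proof (sqrt_lt_R0 (-k) Hk') as Hs.
      eapply is_derive_ext.
      { intro x. unfold sinh. reflexivity. }
      auto_derive; auto. unfold cosh. field; lra.
Qed.

Lemma Ck_deriv k t : is_derive (Ck k) t (- k * ell k t).
Proof.
  unfold Ck, ell, aa.
  destruct (Rlt_dec 0 k) as [Hk|Hk].
  - pose proof (sqrt_lt_R0 k Hk) as Hs.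
    auto_derive; auto.
    assert (Hsq : sqrt k * sqrt k = k) by (apply sqrt_sqrt; lra).
    replace (- k * (sin (sqrt k * t) / sqrt k)) with (- (sqrt k * sqrt k) * (sin (sqrt k*t)/sqrt k)) by (rewrite Hsq; ring).
    field; lra.
  - destruct (Req_EM_T k 0) as [Hk0|Hk0].
    + subst. auto_derive; auto. ring.
    + assert (Hk' : 0 < - k) by lra.
      pose proof (sqrt_lt_R0 (-k) Hk') as Hs.
      assert (Hsq : sqrt (-k) * sqrt (-k) = -k) by (apply sqrt_sqrt; lra).
      eapply is_derive_ext.
      { intro x. unfold cosh. reflexivity. }
      auto_derive; auto. unfold sinh.
      set (E1 := exp (sqrt (- k) * t)). set (E2 := exp (- (sqrt (- k) * t))).
      replace (- k * ((E1 - E2) / 2 / sqrt (- k))) with ((sqrt (-k) * sqrt (-k)) * ((E1 - E2) / 2 / sqrt (- k))) by (rewrite Hsq; ring).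
      field; lra.
Qed.

Lemma sinh_0 : sinh 0 = 0.
Proof. unfold sinh. rewrite Ropp_0, exp_0. field. Qed.

Lemma Ck_pos k t : in_range k t -> 0 < Ck k t.
Proof.
  intro Hr. unfold Ck, aa.
  destruct (Rlt_dec 0 k) as [Hk|Hk].
  - replace (1 - k * ((1 - cos (sqrt k * t)) / k)) with (cos (sqrt k * t)) by (field; lra).
    destruct Hr as [Hr|Hr]; [lra|].
    pose proof (sqrt_lt_R0 k Hk).
    apply cos_gt_0.
    + assert (Rabs (sqrt k * t) < PI / 2) by (rewrite Rabs_mult, Rabs_right; lra).
      apply Rabs_def2 in H0. lra.
    + assert (Rabs (sqrt k * t) < PI / 2) by (rewrite Rabs_mult, Rabs_right; lra).
      apply Rabs_def2 in H0. lra.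
  - destruct (Req_EM_T k 0) as [Hk0|Hk0].
    + subst. lra.
    + replace (1 - k * ((1 - cosh (sqrt (- k) * t)) / k)) with (cosh (sqrt (-k) * t)) by (field; lra).
      apply cosh_pos.
Qed.

Lemma is_derive_eq (f : R -> R) (x l l' : R) : is_derive f x l -> l = l' -> is_derive f x l'.
Proof. intros H E; subst; exact H. Qed.

Lemma tan_k_deriv k t : Ck k t <> 0 -> is_derive (tan_k k) t (/ Ck k t ^ 2).
Proof.
  intro H.
  assert (E : tan_k k = fun x => ell k x / Ck k x) by reflexivity.
  rewrite E.
  eapply is_derive_eq.
  { apply (is_derive_div (ell k) (Ck k) t). apply ell_deriv. apply Ck_deriv. exact H. }
  pose proof (Ck_ell k t) as H0.
  replace (Ck k t * Ck k t - ell k t * (- k * ell k t)) with 1 by (rewrite <- H0; ring).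
  unfold Rdiv; ring.
Qed.

Lemma cosh_neg x : cosh (- x) = cosh x.
Proof. unfold cosh. rewrite Ropp_involutive. lra. Qed.

Lemma aa_even k t : aa k (- t) = aa k t.
Proof.
  unfold aa. destruct (Rlt_dec 0 k).
  - rewrite <- Ropp_mult_distr_r, cos_neg. reflexivity.
  - destruct (Req_EM_T k 0).
    + f_equal. ring.
    + rewrite <- Ropp_mult_distr_r, cosh_neg. reflexivity.
Qed.

Lemma sinh_pos x : 0 < x -> 0 < sinh x.
Proof. intro. rewrite <- sinh_0. apply sinh_lt. exact H. Qed.

Lemma lc_eq k t : (0 < k -> sqrt k * Rabs t < PI) -> lc k t = Ck k t.
Proof.
  intro Hr. unfold lc, Ck.
  destruct (Req_EM_T t 0) as [Ht|Ht].
  - subst. unfold aa. destruct (Rlt_dec 0 k).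
    + rewrite Rmult_0_r, cos_0. field. lra.
    + destruct (Req_EM_T k 0); [subst; field|].
      rewrite Rmult_0_r. unfold cosh. rewrite Ropp_0, exp_0. field. exact n0.
  - unfold ell, cc, aa. destruct (Rlt_dec 0 k) as [Hk|Hk].
    + pose proof (sqrt_lt_R0 k Hk) as Hs.
      assert (Hsin : sin (sqrt k * t) <> 0).
      { specialize (Hr Hk).
        destruct (Rlt_or_le 0 t) as [Hp|Hn].
        - rewrite Rabs_right in Hr by lra. apply Rgt_not_eq, sin_gt_0; nra.
        - assert (t < 0) by lra. rewrite Rabs_left in Hr by lra.
          replace (sqrt k * t) with (- (sqrt k * - t)) by ring. rewrite sin_neg.
          apply Ropp_neq_0_compat, Rgt_not_eq, sin_gt_0; nra. }
      field. repeat split; auto; lra.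
    + destruct (Req_EM_T k 0) as [Hk0|Hk0].
      * subst. field. exact Ht.
      * assert (Hk' : 0 < - k) by lra.
        pose proof (sqrt_lt_R0 (-k) Hk') as Hs.
        assert (Hsin : sinh (sqrt (-k) * t) <> 0).
        { destruct (Rlt_or_le 0 t) as [Hp|Hn].
          - apply Rgt_not_eq, sinh_pos; nra.
          - assert (t < 0) by lra.
            assert (sinh (sqrt (-k) * t) < sinh 0) by (apply sinh_lt; nra).
            rewrite sinh_0 in H0. lra. }
        field. repeat split; auto; lra.
Qed.

Lemma ell_eq_tan k t : Ck k t <> 0 -> ell k t = Ck k t * tan_k k t.
Proof. intro H. unfold tan_k. fold (Ck k t). field. exact H. Qed.

Lemma tan_k_nonneg k t : 0 <= t -> in_range k t -> 0 <= tan_k k t.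
Proof.
  intros H0 Hr. pose proof (Ck_pos k t Hr) as Hc.
  unfold tan_k. fold (Ck k t). apply Rmult_le_pos; [|left; apply Rinv_0_lt_compat; exact Hc].
  unfold ell. destruct (Rlt_dec 0 k) as [Hk|Hk].
  - pose proof (sqrt_lt_R0 k Hk) as Hs. destruct Hr as [Hr|Hr]; [lra|].
    rewrite Rabs_right in Hr by lra.
    apply Rmult_le_pos; [|left; apply Rinv_0_lt_compat; exact Hs].
    apply sin_ge_0; pose proof PI_RGT_0; nra.
  - destruct (Req_EM_T k 0); [exact H0|].
    assert (Hk' : 0 < - k) by lra. pose proof (sqrt_lt_R0 (-k) Hk') as Hs.
    apply Rmult_le_pos; [|left; apply Rinv_0_lt_compat; exact Hs].
    destruct H0 as [H0|H0].
    + left. apply sinh_pos. nra.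
    + subst. rewrite Rmult_0_r, sinh_0. lra.
Qed.

Lemma isd_plus (f g : R -> R) (x a b : R) :
  is_derive f x a -> is_derive g x b -> is_derive (fun t => f t + g t) x (a + b).
Proof. intros. apply (is_derive_plus f g x a b); auto. Qed.
Lemma isd_minus (f g : R -> R) (x a b : R) :
  is_derive f x a -> is_derive g x b -> is_derive (fun t => f t - g t) x (a - b).
Proof. intros. apply (is_derive_minus f g x a b); auto. Qed.
Lemma isd_mult (f g : R -> R) (x a b : R) :
  is_derive f x a -> is_derive g x b -> is_derive (fun t => f t * g t) x (a * g x + f x * b).
Proof. intros. apply (is_derive_mult f g x a b); auto. intros; apply Rmult_comm. Qed.
Lemma isd_const (c x : R) : is_derive (fun _ => c) x 0.
Proof. apply (is_derive_const c x). Qed.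
Lemma isd_id (x : R) : is_derive (fun t => t) x 1.
Proof. apply (is_derive_id x). Qed.
Lemma isd_comp (f g : R -> R) (x a b : R) :
  is_derive f (g x) a -> is_derive g x b -> is_derive (fun t => f (g t)) x (b * a).
Proof. intros. apply (is_derive_comp f g x a b); auto. Qed.
Lemma isd_div (f g : R -> R) (x a b : R) :
  is_derive f x a -> is_derive g x b -> g x <> 0 ->
  is_derive (fun t => f t / g t) x ((a * g x - f x * b) / g x ^ 2).
Proof. intros. apply is_derive_div; auto. Qed.
Lemma isd_scal (f : R -> R) (x c a : R) :
  is_derive f x a -> is_derive (fun t => c * f t) x (c * a).
Proof. intros. apply is_derive_scal; auto. Qed.

Lemma locally_abs (f : R -> R) s e : continuous f s -> 0 < e ->
  locally s (fun t => Rabs (f t - f s) < e).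
Proof.
  intros Hc He.
  assert (H := proj1 (filterlim_locally f (f s)) Hc (mkposreal e He)).
  eapply filter_imp; [|exact H]. intros t Ht. exact Ht.
Qed.

Lemma polar_decomp a b x : a * sin x = b * cos x ->
  a = (a * cos x + b * sin x) * cos x /\ b = (a * cos x + b * sin x) * sin x.
Proof.
  intro H. pose proof (sin2_cos2 x) as SC. unfold Rsqr in SC. split.
  - transitivity (a * (sin x * sin x + cos x * cos x)); [rewrite SC; ring|].
    transitivity (a * cos x * cos x + (a * sin x) * sin x); [ring|]. rewrite H; ring.
  - transitivity (b * (sin x * sin x + cos x * cos x)); [rewrite SC; ring|].
    transitivity (b * sin x * sin x + (b * cos x) * cos x); [ring|]. rewrite <- H; ring.
Qed.

Lemma angle_deriv (f p q : R -> R) (s p' q' : R) :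
  continuous f s -> is_derive p s p' -> is_derive q s q' ->
  locally s (fun t => p t * sin (f t) = q t * cos (f t) /\
                      0 < p t * cos (f t) + q t * sin (f t)) ->
  is_derive f s ((q' * p s - p' * q s) / (p s ^ 2 + q s ^ 2)).
Proof.
  intros Hf Hp Hq Hloc.
  set (N := fun t => q t * p s - p t * q s).
  set (Dn := fun t => p t * p s + q t * q s).
  assert (Hs : p s * sin (f s) = q s * cos (f s) /\ 0 < p s * cos (f s) + q s * sin (f s)).
  { apply (locally_singleton _ _ Hloc). }
  destruct Hs as [Hs1 Hs2].
  set (R0 := p s * cos (f s) + q s * sin (f s)) in *.
  destruct (polar_decomp _ _ _ Hs1) as [Ep0 Eq0]. fold R0 in Ep0, Eq0.
  assert (HD0 : 0 < p s ^ 2 + q s ^ 2).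
  { rewrite Ep0, Eq0. pose proof (sin2_cos2 (f s)) as SC. unfold Rsqr in SC.
    replace ((R0 * cos (f s)) ^ 2 + (R0 * sin (f s)) ^ 2) with (R0 * R0 * (sin (f s) * sin (f s) + cos (f s) * cos (f s))) by ring.
    rewrite SC. nra. }
  assert (Heq : locally s (fun t => f s + atan (N t / Dn t) = f t)).
  { eapply filter_imp; [|apply filter_and; [exact Hloc| apply (locally_abs f s (PI/2) Hf); pose proof PI_RGT_0; lra]].
    intros t [[H1 H2] H3].
    set (R1 := p t * cos (f t) + q t * sin (f t)) in *.
    destruct (polar_decomp _ _ _ H1) as [Ep1 Eq1]. fold R1 in Ep1, Eq1.
    assert (EN : N t = R1 * R0 * sin (f t - f s)).
    { unfold N. rewrite sin_minus, Ep1, Eq1, Ep0, Eq0. ring. }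
    assert (ED : Dn t = R1 * R0 * cos (f t - f s)).
    { unfold Dn. rewrite cos_minus, Ep1, Eq1, Ep0, Eq0. ring. }
    apply Rabs_def2 in H3.
    assert (Hc : 0 < cos (f t - f s)) by (apply cos_gt_0; lra).
    rewrite EN, ED.
    replace (R1 * R0 * sin (f t - f s) / (R1 * R0 * cos (f t - f s))) with (tan (f t - f s))
      by (unfold tan; field; repeat split; lra).
    rewrite atan_tan by lra. ring. }
  eapply is_derive_ext_loc; [exact Heq|].
  eapply is_derive_eq.
  { apply isd_plus; [apply isd_const|].
    apply isd_comp; [apply is_derive_atan|].
    apply isd_div.
    - apply isd_minus; [apply isd_mult; [exact Hq| apply isd_const] | apply isd_mult; [exact Hp| apply isd_const]].
    - apply isd_plus; [apply isd_mult; [exact Hp| apply isd_const] | apply isd_mult; [exact Hq| apply isd_const]].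
    - unfold Dn. lra. }
  unfold N, Dn. unfold Rsqr.
  replace (q s * p s - p s * q s) with 0 by ring.
  field. lra.
Qed.

Definition delta (i j : nat) : R := if Nat.eqb i j then 1 else 0.

Definition dgco (k : R) (i j l : nat) (u : pt) : R :=
  - delta i j * 2 * k * Defs.comp u l / Dk k u ^ 2
  - k * (delta i l * Defs.comp u j + delta j l * Defs.comp u i) / Dk k u ^ 2
  + 4 * k ^ 2 * Defs.comp u i * Defs.comp u j * Defs.comp u l / Dk k u ^ 3.

Ltac pg_tac := unfold partial, gco, metric, dgco, delta, Dk, dot, basis, upd, Defs.comp; simpl;
  apply is_derive_unique; auto_derive; [simpl; try lra | field; simpl; try lra].

Lemma partial_gco k (x y : R) (i j l : nat) : (i < 2)%nat -> (j < 2)%nat -> (l < 2)%nat ->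
  Dk k (x, y) <> 0 -> partial (gco k i j) l (x, y) = dgco k i j l (x, y).
Proof.
  intros Hi Hj Hl HD. unfold Dk, dot in HD; simpl in HD.
  destruct i as [|[|i]]; [| |lia]; destruct j as [|[|j]]; [| |lia| | |lia];
  destruct l as [|[|l]]; try lia; pg_tac. all: rewrite Rmult_1_r; apply Rmult_integral_contrapositive_currified; assumption.
Qed.

Lemma gdet_eq k x y : Dk k (x, y) <> 0 -> gdet k (x, y) = / Dk k (x, y) ^ 3.
Proof.
  intro HD. unfold gdet, gco, metric, basis, Dk, dot in *; simpl in *. field. exact HD.
Qed.

Lemma christ_eq k x y (i j m : nat) : (i < 2)%nat -> (j < 2)%nat -> (m < 2)%nat ->
  Dk k (x, y) <> 0 ->
  christ k i j m (x, y) = - k * (delta i j * Defs.comp (x, y) m + delta i m * Defs.comp (x, y) j) / Dk k (x, y).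
Proof.
  intros Hi Hj Hm HD.
  unfold christ, sum2, ginv. rewrite gdet_eq by exact HD.
  destruct i as [|[|i]]; [| |lia]; destruct j as [|[|j]]; [| |lia| | |lia];
  destruct m as [|[|m]]; try lia;
  rewrite ?partial_gco by (auto; lia);
  unfold dgco, gco, metric, delta, basis, Dk, dot, Defs.comp in *; simpl in *; field; exact HD.
Qed.

Lemma sqrt_inv_cube D : 0 < D -> sqrt (/ D ^ 3) = / (D * sqrt D).
Proof.
  intro H. rewrite sqrt_inv. f_equal.
  replace (D ^ 3) with ((D * D) * D) by ring.
  rewrite sqrt_mult_alt by nra. rewrite sqrt_square by lra. reflexivity.
Qed.

Lemma kg_formula k c s : 0 < Dk k (c s) ->
  geod_curv k c s = det2 (vel c s) (acc c s) / (Dk k (c s) * sqrt (Dk k (c s))).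
Proof.
  intro HD. unfold geod_curv, covacc.
  set (u := c s) in *. set (v := vel c s). set (a := acc c s).
  clearbody u v a. destruct u as [x y]. destruct v as [v1 v2]. destruct a as [a1 a2].
  rewrite gdet_eq by lra. rewrite sqrt_inv_cube by exact HD.
  unfold sum2. rewrite !christ_eq by (auto; lra).
  unfold det2, delta, Defs.comp; simpl.
  assert (0 < sqrt (Dk k (x, y))) by (apply sqrt_lt_R0; exact HD).
  unfold Dk, dot in *; simpl in *. field. split; lra.
Qed.

Definition Hk (k z : R) : R :=
  if Rlt_dec 0 k then atan (sqrt k * z) / sqrt k
  else if Req_EM_T k 0 then z
  else (ln (1 + sqrt (- k) * z) - ln (1 - sqrt (- k) * z)) / (2 * sqrt (- k)).

Lemma neg_bound k z : ~ 0 < k -> k <> 0 -> 0 < 1 + k * z ^ 2 ->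
  0 < 1 + sqrt (- k) * z /\ 0 < 1 - sqrt (- k) * z.
Proof.
  intros Hk Hk0 Hz. assert (Hk' : 0 < - k) by lra.
  pose proof (sqrt_lt_R0 (-k) Hk') as Hs.
  assert (Hsq : sqrt (-k) * sqrt (-k) = -k) by (apply sqrt_sqrt; lra).
  assert (H1 : (sqrt (-k) * z) ^ 2 < 1).
  { replace ((sqrt (-k) * z) ^ 2) with (sqrt (-k) * sqrt (-k) * z ^ 2) by ring. rewrite Hsq. lra. }
  split; nra.
Qed.

Lemma Hk_deriv k z : 0 < 1 + k * z ^ 2 -> is_derive (Hk k) z (/ (1 + k * z ^ 2)).
Proof.
  intro Hz. unfold Hk.
  destruct (Rlt_dec 0 k) as [Hk|Hk].
  - pose proof (sqrt_lt_R0 k Hk) as Hs.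
    assert (Hsq : sqrt k * sqrt k = k) by (apply sqrt_sqrt; lra).
    eapply is_derive_eq.
    { apply isd_div; [|apply isd_const|lra].
      apply isd_comp; [apply is_derive_atan|]. apply isd_scal, isd_id. }
    unfold Rsqr. replace (sqrt k * z * (sqrt k * z)) with (k * z ^ 2) by (rewrite <- Hsq at 1; ring).
    field. split; lra.
  - destruct (Req_EM_T k 0) as [Hk0|Hk0].
    + subst. eapply is_derive_eq; [apply isd_id|]. field.
    + destruct (neg_bound k z Hk Hk0 Hz) as [B1 B2].
      assert (Hk' : 0 < - k) by lra.
      pose proof (sqrt_lt_R0 (-k) Hk') as Hs.
      assert (Hsq : sqrt (-k) * sqrt (-k) = -k) by (apply sqrt_sqrt; lra).
      auto_derive; [repeat split; lra|].
      replace (k * z ^ 2) with (- (sqrt (-k) * sqrt (-k)) * z ^ 2) by (rewrite Hsq; ring).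
      field. repeat split; try lra. rewrite Hsq; lra.
Qed.

Lemma Ck_Hk k z : 0 < 1 + k * z ^ 2 -> Ck k (Hk k z) = / sqrt (1 + k * z ^ 2).
Proof.
  intro Hz. unfold Ck, aa, Hk.
  destruct (Rlt_dec 0 k) as [Hk|Hk].
  - pose proof (sqrt_lt_R0 k Hk) as Hs.
    assert (Hsq : sqrt k * sqrt k = k) by (apply sqrt_sqrt; lra).
    replace (sqrt k * (atan (sqrt k * z) / sqrt k)) with (atan (sqrt k * z)) by (field; lra).
    replace (1 - k * ((1 - cos (atan (sqrt k * z))) / k)) with (cos (atan (sqrt k * z))) by (field; lra).
    rewrite cos_atan. unfold Rsqr.
    replace (sqrt k * z * (sqrt k * z)) with (k * z ^ 2) by (rewrite <- Hsq at 1; ring).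
    field. apply Rgt_not_eq, sqrt_lt_R0; lra.
  - destruct (Req_EM_T k 0) as [Hk0|Hk0].
    + subst. replace (1 + 0 * z ^ 2) with 1 by ring. rewrite sqrt_1. field.
    + destruct (neg_bound k z Hk Hk0 Hz) as [B1 B2].
      assert (Hk' : 0 < - k) by lra.
      pose proof (sqrt_lt_R0 (-k) Hk') as Hs.
      assert (Hsq : sqrt (-k) * sqrt (-k) = -k) by (apply sqrt_sqrt; lra).
      set (A := 1 + sqrt (-k) * z) in *. set (B := 1 - sqrt (-k) * z) in *.
      replace (sqrt (- k) * ((ln A - ln B) / (2 * sqrt (- k)))) with ((ln A - ln B) / 2) by (field; lra).
      replace (1 - k * ((1 - cosh ((ln A - ln B) / 2)) / k)) with (cosh ((ln A - ln B) / 2)) by (field; lra).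
      assert (EAB : A * B = 1 + k * z ^ 2).
      { transitivity (1 - sqrt (-k) * sqrt (-k) * z ^ 2); [unfold A, B; ring | rewrite Hsq; ring]. }
      rewrite <- EAB.
      set (t := (ln A - ln B) / 2).
      assert (Et : exp t * exp t = A / B).
      { rewrite <- exp_plus. replace (t + t) with (ln A - ln B) by (unfold t; field).
        unfold Rminus. rewrite exp_plus, exp_Ropp, !exp_ln by lra. reflexivity. }
      assert (Et2 : exp (- t) = / exp t) by apply exp_Ropp.
      pose proof (exp_pos t) as Ep.
      assert (Ee : exp t = sqrt A / sqrt B).
      { assert (0 < sqrt A) by (apply sqrt_lt_R0; lra).
        assert (0 < sqrt B) by (apply sqrt_lt_R0; lra).
        assert (sqrt A * sqrt A = A) by (apply sqrt_sqrt; lra).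
        assert (sqrt B * sqrt B = B) by (apply sqrt_sqrt; lra).
        assert (Q : (exp t * sqrt B - sqrt A) * (exp t * sqrt B + sqrt A) = 0).
        { replace ((exp t * sqrt B - sqrt A) * (exp t * sqrt B + sqrt A))
            with (exp t * exp t * (sqrt B * sqrt B) - sqrt A * sqrt A) by ring.
          rewrite Et, H1, H2. field. lra. }
        apply Rmult_integral in Q. destruct Q as [Q|Q]; [|nra].
        apply (Rmult_eq_reg_r (sqrt B)); [|lra]. field_simplify; lra. }
      unfold cosh. rewrite Et2, Ee.
      assert (0 < sqrt A) by (apply sqrt_lt_R0; lra).
      assert (0 < sqrt B) by (apply sqrt_lt_R0; lra).
      assert (sqrt A * sqrt A = A) by (apply sqrt_sqrt; lra).
      assert (sqrt B * sqrt B = B) by (apply sqrt_sqrt; lra).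
      rewrite sqrt_mult_alt by lra.
      assert (A + B = 2) by (unfold A, B; ring).
      field_simplify; [|lra..].
      replace (sqrt A ^ 2 + sqrt B ^ 2) with 2 by (simpl; nra). field. split; lra.
Qed.

Lemma Hk_0 k : Hk k 0 = 0.
Proof.
  unfold Hk. destruct (Rlt_dec 0 k).
  - rewrite Rmult_0_r, atan_0. field. apply Rgt_not_eq, sqrt_lt_R0; lra.
  - destruct (Req_EM_T k 0); [reflexivity|].
    rewrite Rmult_0_r, Rplus_0_r, Rminus_0_r, Rminus_diag. field.
    apply Rgt_not_eq, sqrt_lt_R0; lra.
Qed.

Lemma Hk_bound k z : 0 < k -> sqrt k * Rabs (Hk k z) < PI / 2.
Proof.
  intro Hpos. pose proof (sqrt_lt_R0 k Hpos) as Hs. unfold Hk.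
  destruct (Rlt_dec 0 k); [|lra].
  rewrite Rabs_div by lra. rewrite (Rabs_right (sqrt k)) by lra.
  replace (sqrt k * (Rabs (atan (sqrt k * z)) / sqrt k)) with (Rabs (atan (sqrt k * z))) by (field; lra).
  pose proof (atan_bound (sqrt k * z)). apply Rabs_def1; lra.
Qed.

Lemma seg_len_eq k (F P : pt) :
  dot F (psub P F) = 0 -> 0 < Dk k F -> 0 < Dk k P ->
  seg_len k F P = Hk k (sqrt (dot (psub P F) (psub P F)) / sqrt (Dk k F)).
Proof.
  intros Hperp HF HP.
  set (W := dot (psub P F) (psub P F)).
  set (DF := Dk k F) in *.
  assert (HW : 0 <= W) by (unfold W, dot; nra).
  set (b := sqrt W / sqrt DF).
  assert (HsF : 0 < sqrt DF) by (apply sqrt_lt_R0; lra).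
  assert (Hb2 : b ^ 2 = W / DF).
  { unfold b. simpl. rewrite Rmult_1_r.
    replace (sqrt W / sqrt DF * (sqrt W / sqrt DF)) with ((sqrt W * sqrt W) / (sqrt DF * sqrt DF)) by (field; lra).
    rewrite !sqrt_sqrt by lra. reflexivity. }
  assert (EP : Dk k P = DF + k * W).
  { unfold DF, W, Dk. destruct F as [f1 f2], P as [p1 p2]. unfold dot, psub in *; simpl in *.
    transitivity (1 + k * (f1 * f1 + f2 * f2) + k * ((p1 - f1) * (p1 - f1) + (p2 - f2) * (p2 - f2)) + 2 * k * (f1 * (p1 - f1) + f2 * (p2 - f2))); [ring|].
    rewrite Hperp. ring. }
  assert (Du : forall u, 0 <= u <= 1 -> 0 < DF + k * u ^ 2 * W).
  { intros u Hu. replace (DF + k * u ^ 2 * W) with ((1 - u ^ 2) * DF + u ^ 2 * (DF + k * W)) by ring.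
    assert (0 <= u ^ 2 <= 1) by (simpl; nra).
    destruct (Req_dec (u ^ 2) 1) as [E|E].
    - rewrite E. lra.
    - assert (0 < 1 - u ^ 2) by lra. nra. }
  assert (Hd : forall u, 0 <= u <= 1 -> 0 < 1 + k * (b * u) ^ 2).
  { intros u Hu. replace (1 + k * (b * u) ^ 2) with ((DF + k * u ^ 2 * W) / DF)
      by (replace ((b * u) ^ 2) with (b ^ 2 * u ^ 2) by ring; rewrite Hb2; field; lra).
    apply Rdiv_lt_0_compat; [apply Du; exact Hu | lra]. }
  assert (HI : is_RInt (fun u => b * / (1 + k * (b * u) ^ 2)) 0 1 (Hk k b)).
  { replace (Hk k b) with (minus (Hk k (b * 1)) (Hk k (b * 0))).
    2:{ rewrite Rmult_0_r, Rmult_1_r, Hk_0. unfold minus, plus, opp; simpl. ring. }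
    apply (is_RInt_derive (fun u => Hk k (b * u))).
    - intros u Hu. rewrite Rmin_left, Rmax_right in Hu by lra.
      eapply is_derive_eq.
      { apply isd_comp; [apply Hk_deriv, Hd, Hu|]. apply isd_scal, isd_id. }
      ring.
    - intros u Hu. rewrite Rmin_left, Rmax_right in Hu by lra.
      apply (ex_derive_continuous (fun u => b * / (1 + k * (b * u) ^ 2))). specialize (Hd u Hu).
      auto_derive. lra. }
  unfold seg_len. fold W.
  rewrite <- (is_RInt_unique _ _ _ _ HI).
  apply RInt_ext. intros u Hu. rewrite Rmin_left, Rmax_right in Hu by lra.
  assert (Hu' : 0 <= u <= 1) by lra.
  specialize (Du u Hu'). specialize (Hd u Hu').
  assert (Em : metric k (padd F (pscal u (psub P F))) (psub P F) (psub P F)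
              = W * DF / (DF + k * u ^ 2 * W) ^ 2).
  { unfold metric, DF, W, Dk in *. destruct F as [f1 f2], P as [p1 p2].
    unfold dot, psub, padd, pscal in *; simpl in *.
    assert (E1 : 1 + k * ((f1 + u * (p1 - f1)) * (f1 + u * (p1 - f1)) + (f2 + u * (p2 - f2)) * (f2 + u * (p2 - f2)))
      = 1 + k * (f1 * f1 + f2 * f2) + k * u ^ 2 * ((p1 - f1) * (p1 - f1) + (p2 - f2) * (p2 - f2))).
    { replace ((f1 + u * (p1 - f1)) * (f1 + u * (p1 - f1)) + (f2 + u * (p2 - f2)) * (f2 + u * (p2 - f2)))
        with ((f1 * f1 + f2 * f2) + 2 * u * (f1 * (p1 - f1) + f2 * (p2 - f2)) + u ^ 2 * ((p1 - f1) * (p1 - f1) + (p2 - f2) * (p2 - f2))) by ring.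
      rewrite Hperp. ring. }
    rewrite E1.
    assert (E2 : (f1 + u * (p1 - f1)) * (p1 - f1) + (f2 + u * (p2 - f2)) * (p2 - f2)
      = u * ((p1 - f1) * (p1 - f1) + (p2 - f2) * (p2 - f2))).
    { transitivity ((f1 * (p1 - f1) + f2 * (p2 - f2)) + u * ((p1 - f1) * (p1 - f1) + (p2 - f2) * (p2 - f2))); [ring|].
      rewrite Hperp. ring. }
    rewrite E2. field. lra. }
  rewrite Em.
  rewrite sqrt_div_alt by (apply pow_lt; lra).
  replace ((DF + k * u ^ 2 * W) ^ 2) with (Rsqr (DF + k * u ^ 2 * W)) by (unfold Rsqr; ring).
  rewrite sqrt_Rsqr by lra.
  rewrite sqrt_mult_alt by lra.
  replace (1 + k * (b * u) ^ 2) with ((DF + k * u ^ 2 * W) / DF)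
      by (replace ((b * u) ^ 2) with (b ^ 2 * u ^ 2) by ring; rewrite Hb2; field; lra).
  unfold b. assert (sqrt DF * sqrt DF = DF) by (apply sqrt_sqrt; lra).
  match goal with |- ?a = ?b => change (@eq R a b) end. transitivity (sqrt W / sqrt DF * (sqrt DF * sqrt DF) / (DF + k * u ^ 2 * W)); [field; split; lra|]. rewrite H. field. split; lra.
Qed.

Lemma left_lower (f : R -> R) x l d : is_derive f x l -> 0 < l -> 0 < d ->
  exists t, x - d < t < x /\ f t < f x.
Proof.
  intros Hd Hl Hdp. apply is_derive_Reals in Hd.
  destruct (Hd (l / 2) ltac:(lra)) as [del Hdel].
  set (h := - Rmin del d / 2).
  assert (Hm : 0 < Rmin del d) by (apply Rmin_pos; [apply cond_pos|lra]).
  assert (Hh : h <> 0) by (unfold h; lra).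
  assert (Hh2 : Rabs h < del).
  { unfold h. rewrite Rabs_left by lra. pose proof (Rmin_l del d). lra. }
  specialize (Hdel h Hh Hh2). apply Rabs_def2 in Hdel.
  exists (x + h). split.
  - unfold h. pose proof (Rmin_r del d). lra.
  - assert (Hq : 0 < (f (x + h) - f x) / h) by lra.
    assert (h < 0) by (unfold h; lra).
    assert (f (x + h) - f x < 0).
    { destruct (Rlt_or_le (f (x + h) - f x) 0); auto.
      exfalso. assert ((f (x + h) - f x) / h <= 0).
      { assert (/ h < 0) by (apply Rinv_lt_0_compat; lra). unfold Rdiv. nra. }
      lra. }
    lra.
Qed.

Lemma D_tan k t : in_range k t -> 1 + k * tan_k k t ^ 2 = / Ck k t ^ 2.
Proof.
  intro Hr. pose proof (Ck_pos k t Hr) as Hc. pose proof (Ck_ell k t) as E.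
  rewrite (ell_eq_tan k t) in E by lra. field_simplify_eq; [|lra]. lra.
Qed.

Lemma vel_gam k om0 r0 : in_range k r0 ->
  vel (gam k om0) r0 = (/ Ck k r0 ^ 2 * cos om0, / Ck k r0 ^ 2 * sin om0).
Proof.
  intro Hr. pose proof (Ck_pos k r0 Hr) as Hc.
  unfold vel, gam; simpl. f_equal; apply is_derive_unique.
  - eapply is_derive_eq; [apply isd_mult; [apply tan_k_deriv; lra | apply isd_const]|]. cbv beta. field. lra.
  - eapply is_derive_eq; [apply isd_mult; [apply tan_k_deriv; lra | apply isd_const]|]. cbv beta. field. lra.
Qed.

Lemma Dk_gam k om0 t : Dk k (gam k om0 t) = 1 + k * tan_k k t ^ 2.
Proof.
  unfold Dk, gam, dot; simpl. pose proof (sin2_cos2 om0) as SC. unfold Rsqr in SC.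
  transitivity (1 + k * tan_k k t ^ 2 * (sin om0 * sin om0 + cos om0 * cos om0)); [ring|].
  rewrite SC. ring.
Qed.

Lemma om_dir k (K : pt -> Prop) (c : R -> pt) s om0 r0 :
  metric k (c s) (vel c s) (vel c s) = 1 ->
  (exists e, 0 < e /\ forall t, 0 < t < e -> intK K (padd (c s) (pscal t (rotl (vel c s))))) ->
  in_range k r0 ->
  det2 (vel c s) (psub (gam k om0 r0) (c s)) = 0 ->
  metric k (gam k om0 r0) (vel (gam k om0) r0) (vel c s) = 0 ->
  (exists d, 0 < d /\ forall t, r0 - d < t < r0 ->
      forall q, K q ->
        0 <= det2 (vel c s) (psub q (c s)) * det2 (vel c s) (psub (gam k om0 t) (c s))) ->
  snd (vel c s) * sin om0 = - fst (vel c s) * cos om0 /\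
  0 < snd (vel c s) * cos om0 - fst (vel c s) * sin om0 /\
  tan_k k r0 = fst (c s) * cos om0 + snd (c s) * sin om0.
Proof.
  intros Hunit Hccw Hr Hon Hperp Hside.
  pose proof (Ck_pos k r0 Hr) as Hc.
  pose proof (D_tan k r0 Hr) as HDF.
  pose proof (sin2_cos2 om0) as SC. unfold Rsqr in SC.
  rewrite vel_gam in Hperp by exact Hr.
  set (T := tan_k k r0) in *.
  destruct (vel c s) as [v1 v2] eqn:Ev. destruct (c s) as [p1 p2] eqn:EP. simpl.
  set (co := cos om0) in *. set (si := sin om0) in *.
  assert (Hv : v1 * v1 + v2 * v2 <> 0).
  { intro H0. assert (v1 = 0) by nra. assert (v2 = 0) by nra. subst.
    unfold metric, dot in Hunit. simpl in Hunit. lra. }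
  assert (Hdot : v1 * co + v2 * si = 0).
  { unfold metric, Dk, dot, gam in Hperp. cbn [fst snd] in Hperp. fold T co si in Hperp.
    assert (EDF : 1 + k * (T * co * (T * co) + T * si * (T * si)) = 1 + k * T ^ 2).
    { transitivity (1 + k * T ^ 2 * (si * si + co * co)); [ring|]. rewrite SC. ring. }
    rewrite EDF in Hperp.
    assert (Hm : (1 + k * T ^ 2) * (/ Ck k r0 ^ 2 * co * v1 + / Ck k r0 ^ 2 * si * v2) -
       k * (T * co * (/ Ck k r0 ^ 2 * co) + T * si * (/ Ck k r0 ^ 2 * si)) * (T * co * v1 + T * si * v2)
       = / Ck k r0 ^ 2 * (v1 * co + v2 * si)).
    { transitivity (/ Ck k r0 ^ 2 * ((v1 * co + v2 * si) * (1 + k * T ^ 2 - k * T ^ 2 * (si * si + co * co)))); [ring|].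
      rewrite SC. ring. }
    rewrite Hm in Hperp. rewrite HDF in Hperp.
    assert (0 < / Ck k r0 ^ 2) by (apply Rinv_0_lt_compat; apply pow_lt; lra).
    unfold Rdiv in Hperp. apply Rmult_integral in Hperp.
    destruct Hperp as [Hp|Hp].
    - apply Rmult_integral in Hp. destruct Hp as [Hp|Hp]; [lra|exact Hp].
    - exfalso. assert (0 < / (/ Ck k r0 ^ 2) ^ 2) by (apply Rinv_0_lt_compat, pow_lt; lra). lra. }
  split; [lra|].
  assert (Hfoot : T = p1 * co + p2 * si).
  { unfold det2, psub, gam in Hon. simpl in Hon. fold T co si in Hon.
    set (w1 := T * co - p1) in *. set (w2 := T * si - p2) in *.
    assert (A1 : v1 * (w1 * co + w2 * si) = 0).
    { transitivity (si * (v1 * w2 - v2 * w1) + w1 * (v1 * co + v2 * si)); [ring|]. rewrite Hon, Hdot. ring. }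
    assert (A2 : v2 * (w1 * co + w2 * si) = 0).
    { transitivity (- co * (v1 * w2 - v2 * w1) + w2 * (v1 * co + v2 * si)); [ring|]. rewrite Hon, Hdot. ring. }
    assert (Hw : w1 * co + w2 * si = 0).
    { destruct (Req_dec v1 0) as [E1|E1].
      - destruct (Req_dec v2 0) as [E2|E2]; [exfalso; apply Hv; rewrite E1, E2; ring|].
        apply Rmult_integral in A2. destruct A2; [contradiction|assumption].
      - apply Rmult_integral in A1. destruct A1; [contradiction|assumption]. }
    unfold w1, w2 in Hw.
    transitivity (T * (si * si + co * co)); [rewrite SC; ring|]. lra. }
  split; [|exact Hfoot].
  destruct Hccw as [e [He Hccw]].
  specialize (Hccw (e / 2) ltac:(lra)).
  destruct Hccw as [e' [He' Hb]].
  set (q := padd (p1, p2) (pscal (e / 2) (rotl (v1, v2)))).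
  assert (Kq : K q).
  { apply Hb. unfold q, sqd, dot, psub. simpl. ring_simplify. lra. }
  assert (Hqpos : 0 < det2 (v1, v2) (psub q (p1, p2))).
  { unfold q. try rewrite EP; try rewrite Ev. unfold det2, psub, padd, pscal, rotl. simpl.
    assert (0 < v1 * v1 + v2 * v2) by nra. nra. }
  try rewrite Ev in Hqpos; try rewrite EP in Hqpos.
  destruct Hside as [d [Hd Hside]].
  assert (Hdet : v1 * si - v2 * co <> 0).
  { intro H0. apply Hv.
    transitivity ((v1 * co + v2 * si) ^ 2 + (v1 * si - v2 * co) ^ 2).
    - transitivity ((v1 * v1 + v2 * v2) * (si * si + co * co)); [rewrite SC; ring|ring].
    - rewrite Hdot, H0. ring. }
  destruct (Rlt_or_le 0 (v2 * co - v1 * si)) as [Hok|Hbad]; [exact Hok|].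
  exfalso.
  assert (Hneg : 0 < v1 * si - v2 * co) by lra.
  destruct (left_lower (tan_k k) r0 (/ Ck k r0 ^ 2) d (tan_k_deriv k r0 ltac:(lra))
              ltac:(apply Rinv_0_lt_compat, pow_lt; lra) Hd) as [t [Ht Hlt]].
  specialize (Hside t Ht q Kq).
  try rewrite Ev in Hside; try rewrite EP in Hside.
  unfold det2, psub, gam in Hside. simpl in Hside. fold co si T in Hside, Hlt.
  unfold det2, psub in Hqpos. simpl in Hqpos.
  assert (E : v1 * (tan_k k t * si - p2) - v2 * (tan_k k t * co - p1)
             = (tan_k k t - T) * (v1 * si - v2 * co) + (v1 * (T * si - p2) - v2 * (T * co - p1))) by ring.
  assert (E0 : v1 * (T * si - p2) - v2 * (T * co - p1) = 0).
  { unfold det2, psub, gam in Hon. simpl in Hon. exact Hon. }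
  rewrite E, E0 in Hside.
  assert ((tan_k k t - T) * (v1 * si - v2 * co) < 0).
  { assert (tan_k k t - T < 0) by lra. nra. }
  nra.
Qed.

Lemma polar_facts k (P : pt) th0 rho0 : 0 <= rho0 -> in_range k rho0 -> P = gam k th0 rho0 ->
  0 <= tan_k k rho0 /\ dot P P = tan_k k rho0 ^ 2 /\ 0 < Dk k P /\
  ell k rho0 ^ 2 = dot P P / Dk k P /\
  fst P = tan_k k rho0 * cos th0 /\ snd P = tan_k k rho0 * sin th0.
Proof.
  intros H0 Hr EP. pose proof (Ck_pos k rho0 Hr) as Hc.
  pose proof (D_tan k rho0 Hr) as HD.
  pose proof (tan_k_nonneg k rho0 H0 Hr) as HT.
  assert (EDP : Dk k P = 1 + k * tan_k k rho0 ^ 2) by (rewrite EP; apply Dk_gam).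
  assert (Edot : dot P P = tan_k k rho0 ^ 2).
  { rewrite EP. unfold dot, gam. cbn [fst snd]. pose proof (sin2_cos2 th0) as SC. unfold Rsqr in SC.
    transitivity (tan_k k rho0 ^ 2 * (sin th0 * sin th0 + cos th0 * cos th0)); [ring|]. rewrite SC; ring. }
  assert (0 < / Ck k rho0 ^ 2) by (apply Rinv_0_lt_compat, pow_lt; lra).
  split; [exact HT|]. split; [exact Edot|]. split; [lra|]. split.
  - rewrite (ell_eq_tan k rho0) by lra. rewrite Edot, EDP, HD. field. lra.
  - rewrite EP. unfold gam. simpl. split; reflexivity.
Qed.

Lemma locally_nonzero (c : R -> pt) s :
  ex_derive (fun t => fst (c t)) s -> ex_derive (fun t => snd (c t)) s -> c s <> origin ->
  locally s (fun t => c t <> origin).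
Proof.
  intros H1 H2 Hne.
  destruct (Req_dec (fst (c s)) 0) as [E1|E1].
  - assert (E2 : snd (c s) <> 0).
    { intro E2. apply Hne. destruct (c s) as [a b]. simpl in *. subst. reflexivity. }
    eapply filter_imp; [|apply (locally_abs (fun t => snd (c t)) s (Rabs (snd (c s)))); [exact (ex_derive_continuous (fun t => snd (c t)) s H2)| apply Rabs_pos_lt; exact E2]].
    intros t Ht Hct. cbv beta in Ht. rewrite Hct in Ht. simpl in Ht. rewrite Rminus_0_l, Rabs_Ropp in Ht. lra.
  - eapply filter_imp; [|apply (locally_abs (fun t => fst (c t)) s (Rabs (fst (c s)))); [exact (ex_derive_continuous (fun t => fst (c t)) s H1)| apply Rabs_pos_lt; exact E1]].
    intros t Ht Hct. cbv beta in Ht. rewrite Hct in Ht. simpl in Ht. rewrite Rminus_0_l, Rabs_Ropp in Ht. lra.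
Qed.

Lemma ell2_dth k (c : R -> pt) (rho th : R -> R) s :
  (forall t, 0 <= rho t /\ in_range k (rho t) /\ c t = gam k (th t) (rho t)) ->
  (forall t, c t <> origin -> continuous th t) ->
  ex_derive (fun t => fst (c t)) s -> ex_derive (fun t => snd (c t)) s ->
  ell k (rho s) ^ 2 * Derive th s = det2 (c s) (vel c s) / Dk k (c s).
Proof.
  intros Hpol Hcont H1 H2.
  destruct (Hpol s) as [Hr0 [Hrr Hcs]].
  destruct (polar_facts k (c s) (th s) (rho s) Hr0 Hrr Hcs) as [HT [Hdot [HD [Hell _]]]].
  destruct (Req_dec (dot (c s) (c s)) 0) as [E0|E0].
  - rewrite Hell, E0. unfold dot in E0. unfold det2.
    assert (fst (c s) = 0) by nra. assert (snd (c s) = 0) by nra.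
    rewrite H, H0. field. lra.
  - assert (E : c s <> origin).
    { intro Z. apply E0. rewrite Z. unfold dot, origin. simpl. ring. }
    assert (Hth : is_derive th s ((Derive (fun t => snd (c t)) s * fst (c s) - Derive (fun t => fst (c t)) s * snd (c s)) / (fst (c s) ^ 2 + snd (c s) ^ 2))).
    { apply (angle_deriv th (fun t => fst (c t)) (fun t => snd (c t))).
      - apply Hcont, E.
      - apply Derive_correct, H1.
      - apply Derive_correct, H2.
      - eapply filter_imp; [|apply (locally_nonzero c s H1 H2 E)].
        intros t Hne.
        destruct (Hpol t) as [Ht0 [Htr Hct]].
        destruct (polar_facts k (c t) (th t) (rho t) Ht0 Htr Hct) as [HT' [Hdot' [_ [_ [Ex Ey]]]]].
        rewrite Ex, Ey. pose proof (sin2_cos2 (th t)) as SC. unfold Rsqr in SC.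
        split; [ring|].
        replace (tan_k k (rho t) * cos (th t) * cos (th t) + tan_k k (rho t) * sin (th t) * sin (th t))
          with (tan_k k (rho t)) by (transitivity (tan_k k (rho t) * (sin (th t) * sin (th t) + cos (th t) * cos (th t))); [rewrite SC; ring| ring]).
        destruct HT' as [HT'|HT']; [exact HT'|].
        exfalso. apply Hne. rewrite <- HT' in Ex, Ey. rewrite Rmult_0_l in Ex, Ey.
        destruct (c t) as [a b]. simpl in *. subst. reflexivity. }
    rewrite (is_derive_unique _ _ _ Hth).
    rewrite Hell. unfold vel, det2, dot in *. simpl.
    assert (Hne : fst (c s) * fst (c s) + snd (c s) * snd (c s) <> 0).
    { intro Z. apply E. assert (fst (c s) = 0) by nra. assert (snd (c s) = 0) by nra.
      destruct (c s) as [a b]. simpl in *. subst. reflexivity. }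
    field. split; [lra|exact Hne].
Qed.

Lemma Ck_even k t : Ck k (- t) = Ck k t.
Proof. unfold Ck. rewrite aa_even. reflexivity. Qed.

Lemma Ck_x k om0 r0 (P : pt) : in_range k r0 -> 0 < Dk k P ->
  tan_k k r0 = fst P * cos om0 + snd P * sin om0 ->
  Ck k (xsd k om0 r0 P) = sqrt (Dk k (gam k om0 r0)) / sqrt (Dk k P) /\
  lc k (xsd k om0 r0 P) = Ck k (xsd k om0 r0 P).
Proof.
  intros Hr HP HT.
  set (F := gam k om0 r0).
  pose proof (Ck_pos k r0 Hr) as Hc.
  assert (HF : 0 < Dk k F).
  { unfold F. rewrite Dk_gam, D_tan by exact Hr. apply Rinv_0_lt_compat, pow_lt. lra. }
  assert (Hperp : dot F (psub P F) = 0).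
  { unfold F, gam, dot, psub. destruct P as [p1 p2]. cbn [fst snd] in *.
    pose proof (sin2_cos2 om0) as SC. unfold Rsqr in SC.
    transitivity (tan_k k r0 * (p1 * cos om0 + p2 * sin om0) - tan_k k r0 ^ 2 * (sin om0 * sin om0 + cos om0 * cos om0)); [ring|].
    rewrite SC, <- HT. ring. }
  set (W := dot (psub P F) (psub P F)).
  assert (HW : 0 <= W) by (unfold W, dot; nra).
  assert (EP : Dk k P = Dk k F + k * W).
  { unfold W, Dk. destruct F as [f1 f2], P as [p1 p2]. unfold dot, psub in *; cbn [fst snd] in *.
    transitivity (1 + k * (f1 * f1 + f2 * f2) + k * ((p1 - f1) * (p1 - f1) + (p2 - f2) * (p2 - f2)) + 2 * k * (f1 * (p1 - f1) + f2 * (p2 - f2))); [ring|].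
    rewrite Hperp. ring. }
  set (b := sqrt W / sqrt (Dk k F)).
  assert (HsF : 0 < sqrt (Dk k F)) by (apply sqrt_lt_R0; lra).
  assert (Hb2 : b ^ 2 = W / Dk k F).
  { unfold b. simpl. rewrite Rmult_1_r.
    replace (sqrt W / sqrt (Dk k F) * (sqrt W / sqrt (Dk k F))) with ((sqrt W * sqrt W) / (sqrt (Dk k F) * sqrt (Dk k F))) by (field; lra).
    rewrite !sqrt_sqrt by lra. reflexivity. }
  assert (E1 : 1 + k * b ^ 2 = Dk k P / Dk k F) by (rewrite Hb2, EP; field; lra).
  assert (Hb : 0 < 1 + k * b ^ 2) by (rewrite E1; apply Rdiv_lt_0_compat; lra).
  assert (Hseg : seg_len k F P = Hk k b) by (apply seg_len_eq; lra).
  assert (Hx : Ck k (xsd k om0 r0 P) = Ck k (Hk k b) /\ Rabs (xsd k om0 r0 P) = Rabs (Hk k b)).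
  { unfold xsd. fold F. destruct (Rlt_dec _ 0); rewrite Hseg; [split; reflexivity|].
    rewrite Ck_even, Rabs_Ropp. split; reflexivity. }
  destruct Hx as [Hx1 Hx2].
  split.
  - rewrite Hx1, Ck_Hk by exact Hb. rewrite E1.
    rewrite sqrt_div_alt by lra. assert (0 < sqrt (Dk k P)) by (apply sqrt_lt_R0; lra). field. split; lra.
  - apply lc_eq. intro Hk0. rewrite Hx2. pose proof (Hk_bound k b Hk0). pose proof PI_RGT_0. lra.
Qed.

Lemma dom_eq (c : R -> pt) (om : R -> R) s :
  (forall t, snd (vel c t) * sin (om t) = - fst (vel c t) * cos (om t) /\
             0 < snd (vel c t) * cos (om t) - fst (vel c t) * sin (om t)) ->
  continuous om s ->
  ex_derive (Derive (fun t => fst (c t))) s -> ex_derive (Derive (fun t => snd (c t))) s ->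
  Derive om s = det2 (vel c s) (acc c s) / dot (vel c s) (vel c s).
Proof.
  intros Hdir Hc H1 H2.
  assert (Hd : is_derive om s ((- Derive (Derive (fun t => fst (c t))) s * Derive (fun t => snd (c t)) s
      - Derive (Derive (fun t => snd (c t))) s * - Derive (fun t => fst (c t)) s) /
      (Derive (fun t => snd (c t)) s ^ 2 + (- Derive (fun t => fst (c t)) s) ^ 2))).
  { apply (angle_deriv om (fun t => Derive (fun t => snd (c t)) t) (fun t => - Derive (fun t => fst (c t)) t)).
    - exact Hc.
    - apply Derive_correct, H2.
    - apply (is_derive_opp (Derive (fun t => fst (c t)))). apply Derive_correct, H1.
    - apply filter_forall. intro t. destruct (Hdir t) as [A B]. unfold vel in A, B. simpl in A, B.
      split; lra. }
  rewrite (is_derive_unique _ _ _ Hd). unfold det2, dot, vel, acc. simpl. field.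
  intro Z.
  destruct (Hdir s) as [_ B]. unfold vel in B. simpl in B.
  assert (Derive (fun t => fst (c t)) s = 0) by nra.
  assert (Derive (fun t => snd (c t)) s = 0) by nra. rewrite H, H0 in B. lra.
Qed.

Lemma kg_ratio k (c : R -> pt) s om0 r0 :
  0 < Dk k (c s) -> in_range k r0 ->
  metric k (c s) (vel c s) (vel c s) = 1 ->
  snd (vel c s) * sin om0 = - fst (vel c s) * cos om0 ->
  0 < snd (vel c s) * cos om0 - fst (vel c s) * sin om0 ->
  tan_k k r0 = fst (c s) * cos om0 + snd (c s) * sin om0 ->
  geod_curv k c s * (Ck k (xsd k om0 r0 (c s)) / Ck k r0)
    = det2 (vel c s) (acc c s) / dot (vel c s) (vel c s).
Proof.
  intros HD Hr Hunit H1 H2 H3.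
  rewrite kg_formula by exact HD.
  destruct (Ck_x k om0 r0 (c s) Hr HD H3) as [Hx _].
  rewrite Hx.
  pose proof (Ck_pos k r0 Hr) as Hc.
  assert (HDF : Dk k (gam k om0 r0) = / Ck k r0 ^ 2) by (rewrite Dk_gam; apply D_tan, Hr).
  assert (HsF : sqrt (Dk k (gam k om0 r0)) = / Ck k r0).
  { rewrite HDF. replace (/ Ck k r0 ^ 2) with (Rsqr (/ Ck k r0)) by (unfold Rsqr; field; lra).
    apply sqrt_Rsqr. left. apply Rinv_0_lt_compat. exact Hc. }
  rewrite HsF.
  assert (Hs : 0 < sqrt (Dk k (c s))) by (apply sqrt_lt_R0; exact HD).
  assert (Hss : sqrt (Dk k (c s)) * sqrt (Dk k (c s)) = Dk k (c s)) by (apply sqrt_sqrt; lra).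
  set (R := snd (vel c s) * cos om0 - fst (vel c s) * sin om0) in *.
  destruct (polar_decomp (snd (vel c s)) (- fst (vel c s)) om0 H1) as [Ev2 Ev1].
  replace (snd (vel c s) * cos om0 + - fst (vel c s) * sin om0) with R in Ev2, Ev1 by (unfold R; ring).
  assert (Hkey : Dk k (gam k om0 r0) * dot (vel c s) (vel c s) = Dk k (c s) ^ 2).
  { rewrite Dk_gam, H3.
    unfold metric, Dk, dot in Hunit |- *.
    destruct (c s) as [p1 p2]. destruct (vel c s) as [v1 v2]. cbn [fst snd] in *.
    assert (Hn : 1 + k * (p1 * p1 + p2 * p2) <> 0) by (unfold Dk, dot in HD; simpl in HD; lra).
    assert (HU : (1 + k * (p1 * p1 + p2 * p2)) * (v1 * v1 + v2 * v2) - k * (p1 * v1 + p2 * v2) * (p1 * v1 + p2 * v2)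
                 = (1 + k * (p1 * p1 + p2 * p2)) ^ 2).
    { match type of Hunit with ?X / ?Y = 1 =>
        transitivity (X / Y * Y); [field; exact Hn| rewrite Hunit; ring] end. }
    rewrite <- HU.
    assert (EV : v1 * v1 + v2 * v2 = R * R).
    { pose proof (sin2_cos2 om0) as SC. unfold Rsqr in SC.
      transitivity ((- v1) * (- v1) + v2 * v2); [ring|]. rewrite Ev1, Ev2.
      transitivity (R * R * (sin om0 * sin om0 + cos om0 * cos om0)); [ring|rewrite SC; ring]. }
    assert (ET : (p1 * cos om0 + p2 * sin om0) * R = p1 * v2 - p2 * v1).
    { transitivity (p1 * v2 + p2 * (- v1)); [|ring]. rewrite Ev1, Ev2. ring. }
    transitivity (v1 * v1 + v2 * v2 + k * ((p1 * cos om0 + p2 * sin om0) * R) ^ 2).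
    - rewrite EV. ring.
    - rewrite ET. ring. }
  assert (HV : 0 < dot (vel c s) (vel c s)).
  { assert (0 < Dk k (c s) ^ 2) by (apply pow_lt; lra).
    assert (0 < Dk k (gam k om0 r0)) by (rewrite HDF; apply Rinv_0_lt_compat, pow_lt; lra).
    destruct (Rlt_or_le 0 (dot (vel c s) (vel c s))); [assumption|]. nra. }
  apply (Rmult_eq_reg_r (dot (vel c s) (vel c s))); [|lra].
  field_simplify; [|lra..].
  replace (sqrt (Dk k (c s)) ^ 2) with (Dk k (c s)) by (simpl; rewrite Rmult_1_r; symmetry; exact Hss).
  assert (0 < Dk k (gam k om0 r0)) by (rewrite HDF; apply Rinv_0_lt_compat, pow_lt; lra).
  replace (Ck k r0 ^ 2) with (/ Dk k (gam k om0 r0)) by (rewrite HDF; field; lra).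
  replace (dot (vel c s) (vel c s)) with (Dk k (c s) ^ 2 / Dk k (gam k om0 r0)) by (rewrite <- Hkey; field; lra).
  field. lra.
Qed.

Lemma G_deriv k (cx cy vx vy : R -> R) (s ax ay : R) :
  is_derive cx s (vx s) -> is_derive cy s (vy s) -> is_derive vx s ax -> is_derive vy s ay ->
  (forall t, (1 + k * (cx t * cx t + cy t * cy t)) * (vx t * vx t + vy t * vy t)
             - k * (cx t * vx t + cy t * vy t) ^ 2 = (1 + k * (cx t * cx t + cy t * cy t)) ^ 2) ->
  0 < 1 + k * (cx s * cx s + cy s * cy s) -> 0 < vx s * vx s + vy s * vy s ->
  is_derive (fun t => Hk k ((cx t * vx t + cy t * vy t) / (1 + k * (cx t * cx t + cy t * cy t)))) s
    (1 - (cx s * vy s - cy s * vx s) / (1 + k * (cx s * cx s + cy s * cy s))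
         * ((vx s * ay - vy s * ax) / (vx s * vx s + vy s * vy s))).
Proof.
  intros Hcx Hcy Hvx Hvy Hc HD HV.
  set (Q := fun t => cx t * vx t + cy t * vy t).
  set (D := fun t => 1 + k * (cx t * cx t + cy t * cy t)).
  set (V := fun t => vx t * vx t + vy t * vy t).
  assert (HQ : is_derive Q s (vx s * vx s + cx s * ax + (vy s * vy s + cy s * ay))).
  { unfold Q. eapply is_derive_eq; [apply isd_plus; apply isd_mult; eassumption|]. ring. }
  assert (HDd : is_derive D s (2 * k * Q s)).
  { unfold D. eapply is_derive_eq.
    { apply isd_plus; [apply isd_const|]. apply isd_scal. apply isd_plus; apply isd_mult; eassumption. }
    unfold Q. ring. }
  assert (HVd : is_derive V s (2 * (vx s * ax + vy s * ay))).
  { unfold V. eapply is_derive_eq; [apply isd_plus; apply isd_mult; eassumption|]. ring. }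
  set (N := fun t => D t * V t - k * (Q t * Q t) - D t * D t).
  assert (HN0 : forall t, N t = 0) by (intro t; unfold N, D, V, Q; cbv beta; pose proof (Hc t) as H; ring_simplify in H; ring_simplify; lra).
  assert (HNd : is_derive N s (2 * k * Q s * V s + D s * (2 * (vx s * ax + vy s * ay))
                               - k * (2 * Q s * (vx s * vx s + cx s * ax + (vy s * vy s + cy s * ay)))
                               - 2 * D s * (2 * k * Q s))).
  { unfold N. eapply is_derive_eq.
    { apply isd_minus; [apply isd_minus|].
      - apply isd_mult; eassumption.
      - apply isd_scal. apply isd_mult; exact HQ.
      - apply isd_mult; exact HDd. }
    simpl. ring. }
  assert (HN0d : is_derive N s 0).
  { eapply is_derive_ext; [intro t; symmetry; apply HN0|]. apply isd_const. }
  pose proof (is_derive_unique _ _ _ HNd) as U1. rewrite (is_derive_unique _ _ _ HN0d) in U1.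
  pose proof (HN0 s) as E1. unfold N in E1.
  fold (Q s) (D s) (V s) in *.
  assert (Hphi : 0 < 1 + k * (Q s / D s) ^ 2).
  { replace (1 + k * (Q s / D s) ^ 2) with (D s * V s / D s ^ 2)
      by (field_simplify_eq; [|unfold D in *; lra]; nra).
    unfold D, V in *. apply Rdiv_lt_0_compat; [nra|]. apply pow_lt; lra. }
  eapply is_derive_eq.
  { apply isd_comp; [apply Hk_deriv, Hphi|]. apply isd_div; [exact HQ|exact HDd|unfold D in *; lra]. }
  replace (1 + k * (Q s / D s) ^ 2) with (D s * V s / D s ^ 2)
      by (field_simplify_eq; [|unfold D in *; lra]; nra).
  set (ca := cx s * ax + cy s * ay) in *.
  set (va := vx s * ax + vy s * ay) in *.
  assert (EQ' : vx s * vx s + cx s * ax + (vy s * vy s + cy s * ay) = V s + ca) by (unfold V, ca; ring).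
  rewrite EQ' in *.
  assert (Binet : (cx s * vy s - cy s * vx s) * (vx s * ay - vy s * ax) = Q s * va - V s * ca)
    by (unfold Q, V, va, ca; ring).
  assert (HX : (V s + ca) * D s - 2 * k * Q s ^ 2 - D s * V s
               + (cx s * vy s - cy s * vx s) * (vx s * ay - vy s * ax) = 0).
  { apply (Rmult_eq_reg_l (D s)); [|unfold D in *; lra].
    rewrite Binet.
    transitivity (ca * (D s ^ 2 + k * Q s ^ 2 - D s * V s) + Q s * (D s * va - k * Q s * ca - 2 * D s * k * Q s)); [ring|].
    replace (D s ^ 2 + k * Q s ^ 2 - D s * V s) with 0 by lra.
    replace (D s * va - k * Q s * ca - 2 * D s * k * Q s) with 0 by lra.
    ring. }
  fold (D s) (V s).
  assert (HDs : D s <> 0) by (unfold D in *; lra).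
  assert (HVs : V s <> 0) by (unfold V in *; lra).
  change (cx s * vx s + cy s * vy s) with (Q s).
  clearbody Q D V ca va.
  assert (Ephi : 1 + k * (Q s / D s) ^ 2 = D s * V s / D s ^ 2).
  { field_simplify_eq; [|exact HDs]. lra. }
  rewrite Ephi.
  apply Rminus_diag_uniq.
  transitivity (((V s + ca) * D s - 2 * k * Q s ^ 2 - D s * V s
               + (cx s * vy s - cy s * vx s) * (vx s * ay - vy s * ax)) / (D s * V s)).
  - field. auto.
  - rewrite HX. field. auto.
Qed.

Lemma cont_plus (f g : R -> R) x : continuous f x -> continuous g x -> continuous (fun t => f t + g t) x.
Proof. intros. apply (continuous_plus f g x); auto. Qed.
Lemma cont_minus (f g : R -> R) x : continuous f x -> continuous g x -> continuous (fun t => f t - g t) x.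
Proof. intros. apply (continuous_minus f g x); auto. Qed.
Lemma cont_mult (f g : R -> R) x : continuous f x -> continuous g x -> continuous (fun t => f t * g t) x.
Proof. intros. apply (continuous_mult f g x); auto. Qed.
Lemma cont_const (a x : R) : continuous (fun _ => a) x.
Proof. apply (continuous_const a x). Qed.
Lemma cont_div (f g : R -> R) x : continuous f x -> continuous g x -> g x <> 0 ->
  continuous (fun t => f t / g t) x.
Proof. intros. apply cont_mult; auto. apply (continuous_Rinv_comp g x); auto. Qed.

Definition Ifun k (cx cy vx vy ax ay : R -> R) (s : R) : R :=
  (cx s * vy s - cy s * vx s) / (1 + k * (cx s * cx s + cy s * cy s))
  * ((vx s * ay s - vy s * ax s) / (vx s * vx s + vy s * vy s)).

Lemma int_main k (cx cy vx vy ax ay : R -> R) L :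
  (forall s, is_derive cx s (vx s)) -> (forall s, is_derive cy s (vy s)) ->
  (forall s, is_derive vx s (ax s)) -> (forall s, is_derive vy s (ay s)) ->
  (forall s, continuous ax s) -> (forall s, continuous ay s) ->
  (forall t, (1 + k * (cx t * cx t + cy t * cy t)) * (vx t * vx t + vy t * vy t)
             - k * (cx t * vx t + cy t * vy t) ^ 2 = (1 + k * (cx t * cx t + cy t * cy t)) ^ 2) ->
  (forall t, 0 < 1 + k * (cx t * cx t + cy t * cy t)) ->
  (forall t, 0 < vx t * vx t + vy t * vy t) ->
  cx L = cx 0 -> cy L = cy 0 -> vx L = vx 0 -> vy L = vy 0 ->
  is_RInt (Ifun k cx cy vx vy ax ay) 0 L L.
Proof.
  intros Hcx Hcy Hvx Hvy Hax Hay Hc HD HV P1 P2 P3 P4.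
  set (G := fun t => Hk k ((cx t * vx t + cy t * vy t) / (1 + k * (cx t * cx t + cy t * cy t)))).
  assert (HG : is_RInt (fun t => 1 - Ifun k cx cy vx vy ax ay t) 0 L (minus (G L) (G 0))).
  { apply (is_RInt_derive G (fun t => 1 - Ifun k cx cy vx vy ax ay t)).
    - intros t _. unfold G, Ifun. apply G_deriv; auto.
    - intros t _. unfold Ifun.
      assert (Ccx : forall s, continuous cx s) by (intro; apply (ex_derive_continuous cx); eexists; apply Hcx).
      assert (Ccy : forall s, continuous cy s) by (intro; apply (ex_derive_continuous cy); eexists; apply Hcy).
      assert (Cvx : forall s, continuous vx s) by (intro; apply (ex_derive_continuous vx); eexists; apply Hvx).
      assert (Cvy : forall s, continuous vy s) by (intro; apply (ex_derive_continuous vy); eexists; apply Hvy).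
      specialize (HD t). specialize (HV t).
      apply cont_minus; [apply cont_const|].
      apply cont_mult; apply cont_div.
      + apply cont_minus; apply cont_mult; auto.
      + apply cont_plus; [apply cont_const|]. apply cont_mult; [apply cont_const|].
        apply cont_plus; apply cont_mult; auto.
      + lra.
      + apply cont_minus; apply cont_mult; auto.
      + apply cont_plus; apply cont_mult; auto.
      + lra. }
  assert (EG : minus (G L) (G 0) = 0).
  { unfold G. rewrite P1, P2, P3, P4. unfold minus, plus, opp. simpl. ring. }
  rewrite EG in HG.
  pose proof (@is_RInt_const R_NormedModule 0 L 1) as H1.
  pose proof (is_RInt_minus _ _ _ _ _ _ H1 HG) as H.
  match type of H with is_RInt _ _ _ ?v =>
    assert (E : v = L) by (unfold minus, plus, opp, scal; simpl; unfold mult; simpl; ring);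
    rewrite E in H end.
  eapply is_RInt_ext; [|exact H]. intros x _. unfold minus, plus, opp. simpl. ring.
Qed.

Lemma Derive_per (f : R -> R) L : (forall s, f (s + L) = f s) -> ex_derive f L -> Derive f L = Derive f 0.
Proof.
  intros Hp Hd.
  assert (H : is_derive (fun t => f (t + L)) 0 (1 * Derive f L)).
  { apply isd_comp.
    - rewrite Rplus_0_l. apply Derive_correct, Hd.
    - eapply is_derive_eq; [apply isd_plus; [apply isd_id|apply isd_const]|]. ring. }
  assert (H' : is_derive f 0 (1 * Derive f L)).
  { eapply is_derive_ext; [|exact H]. intro t. apply Hp. }
  rewrite (is_derive_unique _ _ _ H'). ring.
Qed.

Theorem theorem5p2
  (k : R) (K : pt -> Prop) (c : R -> pt) (L : R)
  (om r rho th : R -> R)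
  (* K compact convex with nonempty intK, inside M *)
  (HK : compact_convex_body k K)
  (* c : arclength parametrisation of bdry K, once around, period L *)
  (HL : 0 < L)
  (Hper : forall s, c (s + L) = c s)
  (Hinj : forall s t, 0 <= s < L -> 0 <= t < L -> c s = c t -> s = t)
  (Himg : forall p, bdry K p <-> exists s, 0 <= s < L /\ c s = p)
  (HC2 : forall s,
      ex_derive (fun t => fst (c t)) s /\ ex_derive (fun t => snd (c t)) s /\
      ex_derive (Derive (fun t => fst (c t))) s /\
      ex_derive (Derive (fun t => snd (c t))) s /\
      continuous (Derive (Derive (fun t => fst (c t)))) s /\
      continuous (Derive (Derive (fun t => snd (c t)))) s)
  (Hunit : forall s, metric k (c s) (vel c s) (vel c s) = 1)
  (* counterclockwise: K lies to the left of c *)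
  (Hccw : forall s, exists e, 0 < e /\
      forall t, 0 < t < e -> intK K (padd (c s) (pscal t (rotl (vel c s)))))
  (* omega, r : support line lambda at P = c s (chart line through c s with
     direction c' s) is perpendicular to gamma_omega at F = gamma_omega(r),
     K on the side of lambda containing gamma_omega(t), t < r; omega continuous *)
  (Hom_cont : forall s, continuous om s)
  (Hr_range : forall s, in_range k (r s))
  (HF_on : forall s, det2 (vel c s) (psub (gam k (om s) (r s)) (c s)) = 0)
  (HF_perp : forall s,
      metric k (gam k (om s) (r s)) (vel (gam k (om s)) (r s)) (vel c s) = 0)
  (Hside : forall s, exists d, 0 < d /\ forall t, r s - d < t < r s ->
      forall q, K q ->
        0 <= det2 (vel c s) (psub q (c s)) *
             det2 (vel c s) (psub (gam k (om s) t) (c s)))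
  (* geodesic polar coordinates (rho, theta) of P = c s about O,
     theta continuous wherever P <> O *)
  (Hpolar : forall s, 0 <= rho s /\ in_range k (rho s) /\
      c s = gam k (th s) (rho s))
  (Hth_cont : forall s, c s <> origin -> continuous th s) :
  let x s := xsd k (om s) (r s) (c s) in
  let kg s := geod_curv k c s in
  L = RInt (fun s => ell k (rho s) ^ 2 * Derive om s * Derive th s) 0 L /\
  L = RInt (fun s => kg s * ell k (rho s) ^ 2 *
                     (lc k (x s) / lc k (r s)) * Derive th s) 0 L /\
  L = RInt (fun s => kg s * ell k (rho s) ^ 2 *
                     ((1 - k * aa k (x s)) / (1 - k * aa k (r s))) * Derive th s) 0 L.
Proof.
  intros x kg.
  set (cx := fun t => fst (c t)). set (cy := fun t => snd (c t)).
  set (vx := Derive cx). set (vy := Derive cy).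
  set (ax := Derive vx). set (ay := Derive vy).
  assert (Hdir : forall s, snd (vel c s) * sin (om s) = - fst (vel c s) * cos (om s) /\
            0 < snd (vel c s) * cos (om s) - fst (vel c s) * sin (om s) /\
            tan_k k (r s) = fst (c s) * cos (om s) + snd (c s) * sin (om s)).
  { intro s. eapply om_dir; eauto. }
  assert (HDpos : forall s, 0 < Dk k (c s)).
  { intro s. destruct (Hpolar s) as [H0 [H1 H2]].
    destruct (polar_facts k (c s) (th s) (rho s) H0 H1 H2) as [_ [_ [HD _]]]. exact HD. }
  assert (HVpos : forall s, 0 < vx s * vx s + vy s * vy s).
  { intro s. destruct (Hdir s) as [_ [B _]]. unfold vel in B. simpl in B. fold cx cy vx vy in B.
    destruct (Rlt_or_le 0 (vx s * vx s + vy s * vy s)); [assumption|].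
    assert (vx s = 0) by nra. assert (vy s = 0) by nra. rewrite H0, H1 in B. lra. }
  assert (Hcon : forall t, (1 + k * (cx t * cx t + cy t * cy t)) * (vx t * vx t + vy t * vy t)
             - k * (cx t * vx t + cy t * vy t) ^ 2 = (1 + k * (cx t * cx t + cy t * cy t)) ^ 2).
  { intro t. pose proof (Hunit t) as U. pose proof (HDpos t) as HD.
    unfold metric, Dk, dot, vel in U, HD. simpl in U, HD. fold cx cy vx vy in U, HD.
    unfold cx, cy. cbv beta.
    match type of U with ?X / ?Y = 1 =>
      transitivity (X / Y * Y); [field; lra| rewrite U; ring] end. }
  assert (HI : is_RInt (Ifun k cx cy vx vy ax ay) 0 L L).
  { apply int_main.
    - intro s. apply Derive_correct. apply (HC2 s).
    - intro s. apply Derive_correct. apply (HC2 s).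
    - intro s. apply Derive_correct. apply (HC2 s).
    - intro s. apply Derive_correct. apply (HC2 s).
    - intro s. apply (HC2 s).
    - intro s. apply (HC2 s).
    - exact Hcon.
    - intro t. pose proof (HDpos t) as HD. unfold Dk, dot in HD. exact HD.
    - exact HVpos.
    - unfold cx. rewrite <- (Rplus_0_l L), Hper. reflexivity.
    - unfold cy. rewrite <- (Rplus_0_l L), Hper. reflexivity.
    - unfold vx. apply Derive_per; [intro t; unfold cx; rewrite Hper; reflexivity| apply (HC2 L)].
    - unfold vy. apply Derive_per; [intro t; unfold cy; rewrite Hper; reflexivity| apply (HC2 L)]. }
  assert (P1 : forall s, ell k (rho s) ^ 2 * Derive om s * Derive th s = Ifun k cx cy vx vy ax ay s).
  { intro s.
    rewrite Rmult_assoc, (Rmult_comm (Derive om s)), <- Rmult_assoc.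
    rewrite (ell2_dth k c rho th s Hpolar Hth_cont) by apply (HC2 s).
    rewrite (dom_eq c om s) by (try apply (fun t => conj (proj1 (Hdir t)) (proj1 (proj2 (Hdir t)))); try apply Hom_cont; apply (HC2 s)).
    unfold Ifun, det2, dot, Dk, vel, acc. simpl. reflexivity. }
  assert (P23 : forall s, kg s * ell k (rho s) ^ 2 * (Ck k (x s) / Ck k (r s)) * Derive th s
                        = ell k (rho s) ^ 2 * Derive om s * Derive th s).
  { intro s. destruct (Hdir s) as [D1 [D2 D3]].
    assert (E := kg_ratio k c s (om s) (r s) (HDpos s) (Hr_range s) (Hunit s) D1 D2 D3).
    rewrite (dom_eq c om s) by (try apply (fun t => conj (proj1 (Hdir t)) (proj1 (proj2 (Hdir t)))); try apply Hom_cont; apply (HC2 s)).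
    unfold kg, x. rewrite <- E. ring. }
  assert (HLint : L = RInt (fun s => ell k (rho s) ^ 2 * Derive om s * Derive th s) 0 L).
  { rewrite (RInt_ext _ (Ifun k cx cy vx vy ax ay)) by (intros; apply P1).
    symmetry. apply is_RInt_unique. exact HI. }
  split; [exact HLint|]. split.
  - rewrite HLint at 1. apply RInt_ext. intros s _. rewrite <- P23.
    destruct (Hdir s) as [D1 [D2 D3]].
    destruct (Ck_x k (om s) (r s) (c s) (Hr_range s) (HDpos s) D3) as [_ Hlx].
    unfold x. rewrite Hlx.
    rewrite (lc_eq k (r s)).
    + reflexivity.
    + intro Hk. destruct (Hr_range s) as [Hr|Hr]; [lra|]. pose proof PI_RGT_0. lra.
  - rewrite HLint at 1. apply RInt_ext. intros s _. rewrite <- P23. unfold Ck. reflexivity.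
Qed.
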